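(* Let $\mathcal C$ be a pointed category with finite coproducts and $B\colon\mathcal C\times\mathcal C\to Ab$ a bireduced bifunctor, and let $\Delta\colon\mathcal C\to\mathcal C\times\mathcal C$ be the diagonal functor. Then $T_2(B\circ\Delta)\cong(T_{11}B)\circ\Delta$; more precisely, the natural map $B\Delta\to(T_{11}B)\Delta$ induced by $t_{11}$ factors through $t_2\colon B\Delta\to T_2(B\Delta)$, and the resulting map $T_2(B\Delta)\to(T_{11}B)\Delta$ is a natural isomorphism.
   Context: Notation. $\vee$ is the coproduct, $r_k$ are the retractions of a coproduct, and $\nabla^n\colon X^{\vee n}\to X$ is the folding map. Functors and cross-effects. - A bifunctor $B$ is bireduced if $B(X,0)=B(0,Y)=0$. - For a reduced functor $F\colon\mathcal C\to Ab$: $cr_2F(X,Y)=\ker(F(X\vee Y)\to F(X)\oplus F(Y))$ and $cr_3F(X,Y,Z)=cr_2(cr_2F(-,Z))(X,Y)$. - $T_2F(X)=\mathrm{coker}\big(cr_3F(X,X,X)\subseteq F(X^{\vee3})\xrightarrow{F(\nabla^3)}F(X)\big)$, with projection $t_2$. - $T_{11}B(X,Y)=B(X,Y)/(N_1+N_2)$, where $N_1$ is the image of $cr_2(B(-,Y))(X,X)\subseteq B(X\vee X,Y)$ under $B(\nabla^2,1)$ and $N_2$ the image of $cr_2(B(X,-))(Y,Y)$ under $B(1,\nabla^2)$; $t_{11}$ is the projection. *)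

(* Defs.v *)
(* abelian groups are zmodType, homomorphisms {additive _ -> _}. *)
From HB Require Import structures.
From mathcomp Require Import all_boot all_algebra.
Set Implicit Arguments. Unset Strict Implicit. Unset Printing Implicit Defensive.
Import GRing.Theory.
Local Open Scope ring_scope.

Record Cat := {
  Obj :> Type;
  Mor : Obj -> Obj -> Type;
  idm : forall X, Mor X X;
  comp : forall X Y Z, Mor Y Z -> Mor X Y -> Mor X Z;
  comp_idl : forall X Y (f : Mor X Y), comp (idm Y) f = f;
  comp_idr : forall X Y (f : Mor X Y), comp f (idm X) = f;
  comp_assoc : forall X Y Z W (h : Mor Z W) (g : Mor Y Z) (f : Mor X Y),
      comp h (comp g f) = comp (comp h g) f }.
Arguments Mor {c}. Arguments idm {c}. Arguments comp {c X Y Z}.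

(* A pointed category with (chosen) finite coproducts: a zero object
   (which is also the empty coproduct) and binary coproducts. *)
Record PCCat := {
  cat :> Cat;
  zero : cat;
  to_zero : forall X : cat, Mor X zero;
  from_zero : forall X : cat, Mor zero X;
  to_zero_uniq : forall X (f g : Mor X zero), f = g;
  from_zero_uniq : forall X (f g : Mor zero X), f = g;
  cop : cat -> cat -> cat;
  inj1 : forall X Y, Mor X (cop X Y);
  inj2 : forall X Y, Mor Y (cop X Y);
  copair : forall X Y Z, Mor X Z -> Mor Y Z -> Mor (cop X Y) Z;
  copair_inj1 : forall X Y Z (f : Mor X Z) (g : Mor Y Z), comp (copair f g) (inj1 X Y) = f;
  copair_inj2 : forall X Y Z (f : Mor X Z) (g : Mor Y Z), comp (copair f g) (inj2 X Y) = g;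
  copair_uniq : forall X Y Z (f : Mor X Z) (g : Mor Y Z) (h : Mor (cop X Y) Z),
      comp h (inj1 X Y) = f -> comp h (inj2 X Y) = g -> h = copair f g }.
Arguments zero {p}. Arguments to_zero {p}. Arguments from_zero {p}.
Arguments cop {p}. Arguments inj1 {p}. Arguments inj2 {p}. Arguments copair {p X Y Z}.

Section Ops.
Variable C : PCCat.
Definition zmor (X Y : C) : Mor X Y := comp (from_zero Y) (to_zero X).
Definition r1 (X Y : C) : Mor (cop X Y) X := copair (idm X) (zmor Y X).
Definition r2 (X Y : C) : Mor (cop X Y) Y := copair (zmor X Y) (idm Y).
Definition copmap (X X' Y Y' : C) (f : Mor X X') (g : Mor Y Y') :
  Mor (cop X Y) (cop X' Y') := copair (comp (inj1 X' Y') f) (comp (inj2 X' Y') g).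
Definition nabla2 (X : C) : Mor (cop X X) X := copair (idm X) (idm X).
Definition nabla3 (X : C) : Mor (cop (cop X X) X) X := copair (nabla2 X) (idm X).
End Ops.

Record AbFunctor (C : Cat) := {
  F0 : C -> zmodType;
  F1 : forall X Y : C, Mor X Y -> {additive F0 X -> F0 Y};
  F1_id : forall X x, F1 (idm X) x = x;
  F1_comp : forall X Y Z (f : Mor X Y) (g : Mor Y Z) x, F1 (comp g f) x = F1 g (F1 f x) }.
Arguments F1 {C} a {X Y}.

Record AbBifunctor (C : Cat) := {
  B0 : C -> C -> zmodType;
  B1 : forall X X' Y Y' : C, Mor X X' -> Mor Y Y' -> {additive B0 X Y -> B0 X' Y'};
  B1_id : forall X Y x, B1 (idm X) (idm Y) x = x;
  B1_comp : forall X X' X'' Y Y' Y'' (f : Mor X X') (f' : Mor X' X'')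
      (g : Mor Y Y') (g' : Mor Y' Y'') x,
      B1 (comp f' f) (comp g' g) x = B1 f' g' (B1 f g x) }.
Arguments B1 {C} a {X X' Y Y'}.

Definition bireduced (C : PCCat) (B : AbBifunctor C) : Prop :=
  (forall (X : C) (x : B0 B X zero), x = 0) /\ (forall (Y : C) (y : B0 B zero Y), y = 0).

Definition diag (C : Cat) (B : AbBifunctor C) : AbFunctor C :=
  {| F0 := fun X => B0 B X X;
     F1 := fun X Y f => B1 B f f;
     F1_id := fun X x => @B1_id C B X X x;
     F1_comp := fun X Y Z f g x => @B1_comp C B X Y Z X Y Z f g f g x |}.

Unset Implicit Arguments.
Section CrossEffects.
Variable C : PCCat.

(* cr_2 F(X,Y) = ker(F(X v Y) -> F X (+) F Y), as a subgroup (predicate) of F(X v Y) *)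
Definition cr2 (F : AbFunctor C) (X Y : C) (x : F0 F (cop X Y)) : Prop :=
  F1 F (r1 X Y) x = 0 /\ F1 F (r2 X Y) x = 0.

(* cr_3 F(X,Y,Z) = cr_2(cr_2 F(-,Z))(X,Y), as a subgroup of F((X v Y) v Z) *)
Definition cr3 (F : AbFunctor C) (X Y Z : C) (x : F0 F (cop (cop X Y) Z)) : Prop :=
  cr2 F (cop X Y) Z x /\
  F1 F (copmap (r1 X Y) (idm Z)) x = 0 /\
  F1 F (copmap (r2 X Y) (idm Z)) x = 0.

(* the subgroup F(nabla^3)(cr_3 F(X,X,X)) of F(X), whose cokernel is T_2 F(X) *)
Definition T2ker (F : AbFunctor C) (X : C) (y : F0 F X) : Prop :=
  exists x, cr3 F X X X x /\ y = F1 F (nabla3 X) x.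

Definition N1 (B : AbBifunctor C) (X Y : C) (y : B0 B X Y) : Prop :=
  exists x : B0 B (cop X X) Y,
    (B1 B (r1 X X) (idm Y) x = 0 /\ B1 B (r2 X X) (idm Y) x = 0) /\
    y = B1 B (nabla2 X) (idm Y) x.
Definition N2 (B : AbBifunctor C) (X Y : C) (y : B0 B X Y) : Prop :=
  exists x : B0 B X (cop Y Y),
    (B1 B (idm X) (r1 Y Y) x = 0 /\ B1 B (idm X) (r2 Y Y) x = 0) /\
    y = B1 B (idm X) (nabla2 Y) x.
(* N_1 + N_2, whose cokernel is T_11 B(X,Y) *)
Definition T11ker (B : AbBifunctor C) (X Y : C) (y : B0 B X Y) : Prop :=
  exists a b, N1 B X Y a /\ N2 B X Y b /\ y = a + b.
End CrossEffects.

(* Main.v *)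
Require Import Defs.
From HB Require Import structures.
From mathcomp Require Import all_boot all_algebra.
From Stdlib Require Import ClassicalEpsilon.
Import GRing.Theory.
Local Open Scope ring_scope.
Local Notation comp := Defs.comp.

Section CatLemmas.
Variable C : PCCat.

Lemma comp_zl (X Y Z : C) (f : Mor Y Z) : comp f (zmor X Y) = zmor X Z.
Proof. by rewrite /zmor comp_assoc (from_zero_uniq (comp f (from_zero Y)) (from_zero Z)). Qed.

Lemma comp_zr (X Y Z : C) (f : Mor X Y) : comp (zmor Y Z) f = zmor X Z.
Proof. by rewrite /zmor -comp_assoc (to_zero_uniq (comp (to_zero Y) f) (to_zero X)). Qed.

Lemma mor_ext2 (X Y Z : C) (h k : Mor (cop X Y) Z) :
  comp h (inj1 X Y) = comp k (inj1 X Y) -> comp h (inj2 X Y) = comp k (inj2 X Y) -> h = k.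
Proof.
move=> e1 e2; rewrite (copair_uniq (erefl (comp h (inj1 X Y))) (erefl (comp h (inj2 X Y)))).
by symmetry; apply: copair_uniq; rewrite ?e1 ?e2.
Qed.

Lemma copair_inj1' (X Y Z W : C) (f : Mor X Z) (g : Mor Y Z) (h : Mor Z W) :
  comp (comp h (copair f g)) (inj1 X Y) = comp h f.
Proof. by rewrite -comp_assoc copair_inj1. Qed.
Lemma copair_inj2' (X Y Z W : C) (f : Mor X Z) (g : Mor Y Z) (h : Mor Z W) :
  comp (comp h (copair f g)) (inj2 X Y) = comp h g.
Proof. by rewrite -comp_assoc copair_inj2. Qed.
End CatLemmas.

Ltac msimp := repeat progress rewrite ?comp_zl ?comp_zr ?comp_assoc ?comp_idl ?comp_idr
  ?copair_inj1 ?copair_inj2 ?copair_inj1' ?copair_inj2'.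
Ltac mext := rewrite /r1 /r2 /copmap /nabla2 /nabla3;
  apply: mor_ext2; msimp; try done; apply: mor_ext2; msimp; done.

Section Morphs.
Variables (C : PCCat) (X : C).
Let a := copmap (nabla2 X) (idm X).
Let R1 := r1 (cop X X) X.
Let R2 := r2 (cop X X) X.
Let m1 := copmap (r1 X X) (idm X).
Let m2 := copmap (r2 X X) (idm X).
Let J := inj1 (cop X X) X.
Let K := inj2 (cop X X) X.
Lemma E1 : nabla3 X = comp (nabla2 X) a. Proof. rewrite /a; mext. Qed.
Lemma E2 : comp (r1 X X) a = comp (nabla2 X) R1. Proof. rewrite /a /R1; mext. Qed.
Lemma E3 : comp (r2 X X) a = R2. Proof. rewrite /a /R2; mext. Qed.
Lemma E4 : comp (r1 X X) R1 = comp (r1 X X) m1. Proof. rewrite /m1 /R1; mext. Qed.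
Lemma E5 : R2 = comp (r2 X X) m1. Proof. rewrite /m1 /R2; mext. Qed.
Lemma E6 : comp (r2 X X) R1 = comp (r1 X X) m2. Proof. rewrite /m2 /R1; mext. Qed.
Lemma E7 : R2 = comp (r2 X X) m2. Proof. rewrite /m2 /R2; mext. Qed.
Lemma E8a : comp R1 J = idm _. Proof. by rewrite /R1 /J /r1 copair_inj1. Qed.
Lemma E8b : comp R1 K = zmor _ _. Proof. by rewrite /R1 /K /r1 copair_inj2. Qed.
Lemma E9a : comp R2 J = zmor _ _. Proof. by rewrite /R2 /J /r2 copair_inj1. Qed.
Lemma E9b : comp R2 K = idm _. Proof. by rewrite /R2 /K /r2 copair_inj2. Qed.
Lemma E10a : comp m1 J = comp (inj1 X X) (r1 X X). Proof. by rewrite /m1 /J /copmap copair_inj1. Qed.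
Lemma E10b : comp m1 K = inj2 X X. Proof. by rewrite /m1 /K /copmap copair_inj2 comp_idr. Qed.
Lemma E10c : comp m2 J = comp (inj1 X X) (r2 X X). Proof. by rewrite /m2 /J /copmap copair_inj1. Qed.
Lemma E10d : comp m2 K = inj2 X X. Proof. by rewrite /m2 /K /copmap copair_inj2 comp_idr. Qed.
Lemma E11a : comp (nabla3 X) J = nabla2 X. Proof. by rewrite /J /nabla3 copair_inj1. Qed.
Lemma E11b : comp (nabla3 X) K = idm X. Proof. by rewrite /K /nabla3 copair_inj2. Qed.
Lemma E12 : comp (r1 X X) (inj1 X X) = idm X. Proof. by rewrite /r1 copair_inj1. Qed.
Lemma E13 : comp (r1 X X) (inj2 X X) = zmor X X. Proof. by rewrite /r1 copair_inj2. Qed.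
Lemma E14 : comp (r2 X X) (inj1 X X) = zmor X X. Proof. by rewrite /r2 copair_inj1. Qed.
Lemma E15 : comp (r2 X X) (inj2 X X) = idm X. Proof. by rewrite /r2 copair_inj2. Qed.
Lemma E16 : comp (nabla2 X) (inj1 X X) = idm X. Proof. by rewrite /nabla2 copair_inj1. Qed.
Lemma E17 : comp (nabla2 X) (inj2 X X) = idm X. Proof. by rewrite /nabla2 copair_inj2. Qed.
End Morphs.

Section MkAdd.
Variables (U V : zmodType) (f : U -> V) (hf : GRing.zmod_morphism f).
Definition mkf := f.
HB.instance Definition _ := GRing.isZmodMorphism.Build U V mkf hf.
Definition mkadd : {additive U -> V} := mkf.
Lemma mkaddE x : mkadd x = f x. Proof. by []. Qed.
End MkAdd.

Section Bif.
Variables (C : PCCat) (B : AbBifunctor C) (HB : bireduced B).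

Lemma Bc (X X' X'' Y Y' Y'' : C) (f : Mor X X') (f' : Mor X' X'')
      (g : Mor Y Y') (g' : Mor Y' Y'') x :
  B1 B f' g' (B1 B f g x) = B1 B (comp f' f) (comp g' g) x.
Proof. by rewrite B1_comp. Qed.

Lemma Bzl (X X' Y Y' : C) (g : Mor Y Y') x : B1 B (zmor X X') g x = 0.
Proof.
rewrite -[g]comp_idr /zmor -Bc.
by rewrite [B1 B (to_zero X) (idm Y) x](proj2 HB) raddf0.
Qed.

Lemma Bzr (X X' Y Y' : C) (f : Mor X X') x : B1 B f (zmor Y Y') x = 0.
Proof.
rewrite -[f]comp_idr /zmor -Bc.
by rewrite [B1 B (idm X) (to_zero Y) x](proj1 HB) raddf0.
Qed.

Variables (T11 : C -> C -> zmodType)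
  (t11 : forall X Y : C, {additive B0 B X Y -> T11 X Y})
  (t11_ker : forall X Y (x : B0 B X Y), t11 X Y x = 0 <-> T11ker C B X Y x).

Lemma cong1 (X : C) (z : B0 B (cop X X) X) :
  t11 X X (B1 B (nabla2 X) (idm X) z) =
  t11 X X (B1 B (r1 X X) (idm X) z) + t11 X X (B1 B (r2 X X) (idm X) z).
Proof.
pose c := z - B1 B (comp (inj1 X X) (r1 X X)) (idm X) z
            - B1 B (comp (inj2 X X) (r2 X X)) (idm X) z.
have hc : T11ker C B X X (B1 B (nabla2 X) (idm X) c).
  exists (B1 B (nabla2 X) (idm X) c), 0; split; [|split].
  - exists c; split; last by [].
    by split; rewrite /c !raddfB !Bc !comp_idl !comp_assoc;
     rewrite ?E12 ?E13 ?E14 ?E15 ?comp_idl ?comp_zr Bzl ?subr0 subrr.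
  - by exists 0; rewrite !raddf0.
  - by rewrite addr0.
move/t11_ker: hc; rewrite /c !raddfB !Bc !comp_idl !comp_assoc E16 E17 !comp_idl.
by move/eqP; rewrite subr_eq0 subr_eq addrC => /eqP.
Qed.

Lemma cong2 (X : C) (z : B0 B X (cop X X)) :
  t11 X X (B1 B (idm X) (nabla2 X) z) =
  t11 X X (B1 B (idm X) (r1 X X) z) + t11 X X (B1 B (idm X) (r2 X X) z).
Proof.
pose c := z - B1 B (idm X) (comp (inj1 X X) (r1 X X)) z
            - B1 B (idm X) (comp (inj2 X X) (r2 X X)) z.
have hc : T11ker C B X X (B1 B (idm X) (nabla2 X) c).
  exists 0, (B1 B (idm X) (nabla2 X) c); split; [|split].
  - by exists 0; rewrite !raddf0.
  - exists c; split; last by [].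
    by split; rewrite /c !raddfB !Bc !comp_idl !comp_assoc;
     rewrite ?E12 ?E13 ?E14 ?E15 ?comp_idl ?comp_zr Bzr ?subr0 subrr.
  - by rewrite add0r.
move/t11_ker: hc; rewrite /c !raddfB !Bc !comp_idl !comp_assoc E16 E17 !comp_idl.
by move/eqP; rewrite subr_eq0 subr_eq addrC => /eqP.
Qed.

Lemma cong1g (X Y : C) (p : Mor Y (cop X X)) (q : Mor Y X) (u : B0 B Y Y) :
  t11 X X (B1 B (comp (nabla2 X) p) q u) =
  t11 X X (B1 B (comp (r1 X X) p) q u) + t11 X X (B1 B (comp (r2 X X) p) q u).
Proof. by have := cong1 _ (B1 B p q u); rewrite !Bc !comp_idl. Qed.

Lemma cong2g (X Y : C) (p : Mor Y (cop X X)) (q : Mor Y X) (u : B0 B Y Y) :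
  t11 X X (B1 B q (comp (nabla2 X) p) u) =
  t11 X X (B1 B q (comp (r1 X X) p) u) + t11 X X (B1 B q (comp (r2 X X) p) u).
Proof. by have := cong2 _ (B1 B q p u); rewrite !Bc !comp_idl. Qed.

Lemma ker2_11 (X : C) (x : B0 B X X) : T2ker C (diag B) X x -> t11 X X x = 0.
Proof.
case=> u [[[hR1 hR2] [hm1 hm2]] ->].
have hR1' : B1 B (r1 (cop X X) X) (r1 (cop X X) X) u = 0 := hR1.
have hR2' : B1 B (r2 (cop X X) X) (r2 (cop X X) X) u = 0 := hR2.
have hm1' : B1 B (copmap (r1 X X) (idm X)) (copmap (r1 X X) (idm X)) u = 0 := hm1.
have hm2' : B1 B (copmap (r2 X X) (idm X)) (copmap (r2 X X) (idm X)) u = 0 := hm2.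
change (t11 X X (B1 B (nabla3 X) (nabla3 X) u) = 0).
rewrite E1 cong1g !cong2g E2 E3.
have z11 : B1 B (comp (nabla2 X) (r1 (cop X X) X)) (comp (nabla2 X) (r1 (cop X X) X)) u = 0.
  by rewrite -Bc hR1' raddf0.
have z22 : B1 B (r2 (cop X X) X) (r2 (cop X X) X) u = 0 := hR2'.
rewrite z11 z22 !raddf0 add0r addr0 cong1g cong2g.
have z1 : B1 B (comp (r1 X X) (r1 (cop X X) X)) (r2 (cop X X) X) u = 0.
  by rewrite E4 E5 -Bc hm1' raddf0.
have z2 : B1 B (comp (r2 X X) (r1 (cop X X) X)) (r2 (cop X X) X) u = 0.
  by rewrite E6 E7 -Bc hm2' raddf0.
have z3 : B1 B (r2 (cop X X) X) (comp (r1 X X) (r1 (cop X X) X)) u = 0.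
  by rewrite E4 E5 -Bc hm1' raddf0.
have z4 : B1 B (r2 (cop X X) X) (comp (r2 X X) (r1 (cop X X) X)) u = 0.
  by rewrite E6 E7 -Bc hm2' raddf0.
by rewrite z1 z2 z3 z4 !raddf0 !addr0.
Qed.

Lemma cr3D (X : C) (u v : B0 B (cop (cop X X) X) (cop (cop X X) X)) :
  cr3 C (diag B) X X X u -> cr3 C (diag B) X X X v -> cr3 C (diag B) X X X (u + v).
Proof.
move=> [[a1 a2] [a3 a4]] [[b1 b2] [b3 b4]].
by rewrite /cr3 /cr2 !raddfD a1 a2 a3 a4 b1 b2 b3 b4 !addr0.
Qed.

Lemma N1_T2 (X : C) (x : B0 B X X) : N1 C B X X x -> T2ker C (diag B) X x.
Proof.
case=> c [[h1 h2] ->].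
exists (B1 B (inj1 (cop X X) X) (inj2 (cop X X) X) c); split.
  rewrite /cr3 /cr2 /= !Bc E8a E8b E9a E9b E10a E10b E10c E10d Bzl Bzr.
  by rewrite -[inj2 X X]comp_idr -!Bc h1 h2 !raddf0.
by rewrite /= Bc E11a E11b.
Qed.

Lemma N2_T2 (X : C) (x : B0 B X X) : N2 C B X X x -> T2ker C (diag B) X x.
Proof.
case=> c [[h1 h2] ->].
exists (B1 B (inj2 (cop X X) X) (inj1 (cop X X) X) c); split.
  rewrite /cr3 /cr2 /= !Bc E8a E8b E9a E9b E10a E10b E10c E10d Bzl Bzr.
  by rewrite -[inj2 X X]comp_idr -!Bc h1 h2 !raddf0.
by rewrite /= Bc E11a E11b.
Qed.

Lemma ker11_2 (X : C) (x : B0 B X X) : T11ker C B X X x -> T2ker C (diag B) X x.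
Proof.
case=> a [b [/N1_T2 [u [hu ->]] [/N2_T2 [v [hv ->]] ->]]].
by exists (u + v); split; [apply: cr3D | rewrite raddfD].
Qed.
End Bif.

Theorem proposition2p7 (C : PCCat) (B : AbBifunctor C) (HB : bireduced B)
  (T2 : C -> zmodType)
  (t2 : forall X : C, {additive B0 B X X -> T2 X})
  (T2map : forall X Y : C, Mor X Y -> {additive T2 X -> T2 Y})
  (t2_surj : forall X (q : T2 X), exists x, t2 X x = q)
  (t2_ker : forall X (x : B0 B X X), t2 X x = 0 <-> T2ker C (diag B) X x)
  (t2_nat : forall X Y (f : Mor X Y) x, T2map X Y f (t2 X x) = t2 Y (B1 B f f x))
  (T11 : C -> C -> zmodType)
  (t11 : forall X Y : C, {additive B0 B X Y -> T11 X Y})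
  (T11map : forall X X' Y Y' : C, Mor X X' -> Mor Y Y' -> {additive T11 X Y -> T11 X' Y'})
  (t11_surj : forall X Y (q : T11 X Y), exists x, t11 X Y x = q)
  (t11_ker : forall X Y (x : B0 B X Y), t11 X Y x = 0 <-> T11ker C B X Y x)
  (t11_nat : forall X X' Y Y' (f : Mor X X') (g : Mor Y Y') x,
      T11map X X' Y Y' f g (t11 X Y x) = t11 X' Y' (B1 B f g x)) :
  exists phi : forall X : C, {additive T2 X -> T11 X X},
    (forall X (x : B0 B X X), phi X (t2 X x) = t11 X X x) /\
    (forall X, bijective (phi X)) /\
    (forall X Y (f : Mor X Y) (q : T2 X),
        phi Y (T2map X Y f q) = T11map X Y X Y f f (phi X q)).
Proof.
pose pre2 X q := proj1_sig (constructive_indefinite_description _ (t2_surj X q)).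
have pre2E X q : t2 X (pre2 X q) = q
  := proj2_sig (constructive_indefinite_description _ (t2_surj X q)).
pose pre11 X q := proj1_sig (constructive_indefinite_description _ (t11_surj X X q)).
have pre11E X q : t11 X X (pre11 X q) = q
  := proj2_sig (constructive_indefinite_description _ (t11_surj X X q)).
have wd X (x y : B0 B X X) : t2 X x = t2 X y -> t11 X X x = t11 X X y.
  move=> /eqP; rewrite -subr_eq0 -raddfB => /eqP /t2_ker.
  move=> /(@ker2_11 C B HB T11 t11 t11_ker X _) /eqP; rewrite raddfB subr_eq0 => /eqP //.
have wd' X (x y : B0 B X X) : t11 X X x = t11 X X y -> t2 X x = t2 X y.
  move=> /eqP; rewrite -subr_eq0 -raddfB => /eqP /t11_ker.
  move=> /(@ker11_2 C B HB X _) /t2_ker /eqP; rewrite raddfB subr_eq0 => /eqP //.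
pose f X q := t11 X X (pre2 X q).
have fE X x : f X (t2 X x) = t11 X X x by apply: wd; rewrite pre2E.
have fadd X : GRing.zmod_morphism (f X).
  move=> a b; rewrite -(pre2E X a) -(pre2E X b) -raddfB !fE raddfB //.
exists (fun X => @mkadd _ _ _ (fadd X)); split; [|split].
- by move=> X x; rewrite mkaddE fE.
- move=> X; exists (fun p => t2 X (pre11 X p)) => q; rewrite mkaddE.
    by rewrite -(pre2E X q) fE; apply: wd'; rewrite pre11E.
  by rewrite fE pre11E.
- move=> X Y g q; rewrite !mkaddE -(pre2E X q) t2_nat !fE t11_nat //.
Qed.
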